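(* Let $a$ be real with $|a|>1$, let $x$ be the real solution of $x^{5}+x=a$, and put $y=x/a$. Define the numbers $c_k$ ($k\ge 1$) by $c_1=\tfrac15$ and $c_{k+1}=\dfrac{5k-1}{5(k+1)}\,c_k$ (so that $(1-y)^{1/5}=1-\sum_{k\ge1}c_k y^k$ for $|y|<1$). Define $$K_{0}=1+\sum_{m=1}^{\infty}\frac{(-1)^{m}}{a^{4m}}\sum_{n=0}^{m-1}(-1)^{n}\binom{m-1}{n}c_{4m+n+1},$$ $$K_{1}=-|a|^{4/5}+\sum_{m=1}^{\infty}\frac{(-1)^{m}}{a^{4(m-1)}}\sum_{n=0}^{m-1}(-1)^{n}\binom{m-1}{n}c_{4m+n-3},$$ and for $j=2,3,4$ $$K_{j}=\sum_{m=1}^{\infty}\frac{(-1)^{m}}{a^{4(m-1)}}\sum_{n=0}^{m-1}(-1)^{n}\binom{m-1}{n}c_{4m+n-4+j}.$$ Then these series converge and $y=x/a$ satisfies the quartic equation $$K_{4}y^{4}+K_{3}y^{3}+K_{2}y^{2}+K_{1}y+K_{0}=0 .$$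
   Context: The real solution $x$ of $x^5+x=a$ is unique since $x\mapsto x^5+x$ is strictly increasing; it satisfies $0<x/a<1$. Here $|a|^{4/5}$ denotes the positive real value. The quantities $K_0,\dots,K_4$ (called ''ultraradicals'' in $a$) are series in $a^{-4}$ obtained by expanding $y=|a|^{-4/5}(1-y)^{1/5}$ binomially and repeatedly replacing $y^{5}$ by $a^{-4}(1-y)$ to eliminate all powers $y^k$, $k\ge5$. *)

(* Defs.v *)
From Stdlib Require Import Reals.
From Coquelicot Require Import Coquelicot.
Open Scope R_scope.

(* c k for k >= 1: c 1 = 1/5, c (k+1) = (5k-1)/(5(k+1)) c k.
   c 0 is an unused dummy value (never referenced by the K_j). *)
Fixpoint c (k : nat) : R :=
  match k with
  | O => 0
  | S O => 1 / 5
  | S (S k' as k1) => (5 * INR k1 - 1) / (5 * INR (S k1)) * c k1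
  end.

Definition binom (m n : nat) : R := Binomial.C m n.

(* Summation index shift: the paper's outer index m >= 1 is written here as
   m = p + 1 with p : nat, and the inner sum over n = 0 .. m-1 = 0 .. p is
   Coquelicot's sum_n (which sums indices 0..p). *)

Definition K0term (a : R) (p : nat) : R :=
  (-1) ^ (S p) / a ^ (4 * S p) *
  sum_n (fun n => (-1) ^ n * binom p n * c (4 * S p + n + 1)) p.

Definition Kterm (a : R) (j : nat) (p : nat) : R :=
  (-1) ^ (S p) / a ^ (4 * p) *
  sum_n (fun n => (-1) ^ n * binom p n * c (4 * S p + n - 4 + j)) p.

Definition K0 (a : R) : R := 1 + Series (K0term a).
Definition K1 (a : R) : R := - Rpower (Rabs a) (4 / 5) + Series (Kterm a 1).
Definition K2 (a : R) : R := Series (Kterm a 2).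
Definition K3 (a : R) : R := Series (Kterm a 3).
Definition K4 (a : R) : R := Series (Kterm a 4).

(* Main.v *)
Require Import Defs.
From Stdlib Require Import Reals Lra Lia.
From Coquelicot Require Import Coquelicot.
Open Scope R_scope.

Lemma div_le1 x y : 0 < y -> x <= y -> x / y <= 1.
Proof. intros Hy Hxy. apply Rmult_le_reg_r with y; auto.
  unfold Rdiv. rewrite Rmult_assoc, Rinv_l by lra. lra. Qed.

Lemma c_S k : (1 <= k)%nat -> c (S k) = (5 * INR k - 1) / (5 * INR (S k)) * c k.
Proof. destruct k as [|k]; [lia|]. intros _. reflexivity. Qed.

Lemma c_bounds k : 0 <= c k <= 1/5.
Proof.
  induction k as [|k IH]; [simpl; lra|].
  destruct k as [|k]; [simpl; lra|].
  rewrite c_S by lia.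
  assert (H1 : 1 <= INR (S k)) by (apply (le_INR 1); lia).
  rewrite (S_INR (S k)).
  assert (0 <= (5 * INR (S k) - 1) / (5 * (INR (S k) + 1)) <= 1).
  { split. apply Rdiv_le_0_compat; lra.
    apply div_le1; lra. }
  split. apply Rmult_le_pos; lra.
  apply Rle_trans with (1 * c (S k)). apply Rmult_le_compat_r; lra. lra.
Qed.

Fixpoint dd (p N : nat) : R :=
  match p with O => c N | S q => dd q N - dd q (S N) end.

Fixpoint Q (p N : nat) : R :=
  match p with O => 1 | S q => Q q N * ((INR q + 6/5) / (INR N + INR q + 1)) end.

Lemma Q_shift p N : Q p (S N) * (INR N + INR p + 1) = Q p N * (INR N + 1).
Proof.
  induction p as [|p IH]; cbn [Q].
  - simpl. lra.
  - assert (0 <= INR N) by apply pos_INR.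
    assert (0 <= INR p) by apply pos_INR.
    replace (Q p (S N)) with (Q p N * (INR N + 1) / (INR N + INR p + 1))
      by (rewrite <- IH; unfold Rdiv; rewrite Rmult_assoc, Rinv_r by lra; ring).
    rewrite !S_INR. field. lra.
Qed.

Lemma dd_closed p N : (1 <= N)%nat -> dd p N = c N * Q p N.
Proof.
  revert N; induction p as [|p IH]; intros N HN; simpl.
  - ring.
  - rewrite IH by lia. rewrite IH by lia.
    rewrite c_S by lia.
    assert (H1 : 1 <= INR N) by (apply (le_INR 1); lia).
    assert (0 <= INR p) by apply pos_INR.
    assert (HQ := Q_shift p N).
    replace (Q p (S N)) with (Q p N * (INR N + 1) / (INR N + INR p + 1))
      by (rewrite <- HQ; field; lra).
    rewrite S_INR. field. lra.
Qed.

Lemma Q_bounds p N : (1 <= N)%nat -> 0 <= Q p N <= 1.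
Proof.
  intros HN. induction p as [|p IH]; simpl; [lra|].
  assert (H1 : 1 <= INR N) by (apply (le_INR 1); lia).
  assert (0 <= INR p) by apply pos_INR.
  assert (0 <= (INR p + 6/5) / (INR N + INR p + 1) <= 1).
  { split. apply Rdiv_le_0_compat; lra. apply div_le1; lra. }
  split. apply Rmult_le_pos; lra.
  apply Rle_trans with (1 * 1). apply Rmult_le_compat; lra. lra.
Qed.

Lemma dd_bounds p N : (1 <= N)%nat -> 0 <= dd p N <= 1/5.
Proof.
  intros HN. rewrite dd_closed by lia.
  destruct (Q_bounds p N HN). destruct (c_bounds N).
  split. apply Rmult_le_pos; lra.
  apply Rle_trans with (1/5 * 1). apply Rmult_le_compat; lra. lra.
Qed.

Lemma binsum p N :
  sum_f_R0 (fun n => (-1)^n * Binomial.C p n * c (N + n)%nat) p = dd p N.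
Proof.
  revert N. induction p as [|p IH]; intros N.
  - simpl. rewrite Nat.add_0_r. unfold Binomial.C. simpl. field.
  - simpl dd. rewrite <- IH, <- IH.
    rewrite (decomp_sum _ (S p)) by lia. simpl pred.
    rewrite C_n_0. simpl pow. rewrite Nat.add_0_r.
    destruct p as [|q].
    + cbn [sum_f_R0]. rewrite C_n_n, C_n_0.
      replace (N + 1)%nat with (S N) by lia. rewrite !Nat.add_0_r. simpl pow. ring.
    + rewrite (decomp_sum (fun n => (-1)^n * Binomial.C (S q) n * c (N + n)%nat) (S q)) by lia. simpl pred.
      rewrite C_n_0. simpl pow. rewrite Nat.add_0_r.
      rewrite tech5.
      rewrite (tech5 (fun n => (-1)^n * Binomial.C (S q) n * c (S N + n)%nat) q).
      rewrite (sum_eq (fun i => -1 * (-1) ^ i * Binomial.C (S (S q)) (S i) * c (N + S i)%nat)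
          (fun i => -1 * (-1) ^ i * Binomial.C (S q) (S i) * c (N + S i)%nat
                   - (-1) ^ i * Binomial.C (S q) i * c (S N + i)%nat)).
      2:{ intros i Hi. rewrite <- pascal by lia.
          replace (S N + i)%nat with (N + S i)%nat by lia. ring. }
      rewrite minus_sum. rewrite !C_n_n.
      replace (S N + S q)%nat with (N + S (S q))%nat by lia.
      simpl pow. ring.
Qed.


Definition Gs (y : R) (e : nat -> R) (k : nat) : R := e (S k) * y ^ (S k).
Definition G (y : R) (e : nat -> R) : R := Series (Gs y e).

Lemma ex_bnd y M u : 0 <= y < 1 -> (forall k, Rabs (u k) <= M * y ^ k) -> ex_series u.
Proof.
  intros Hy H. apply ex_series_Rabs.
  apply (@ex_series_le R_AbsRing R_CompleteNormedModule _ (fun k => M * y ^ k)).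
  - intros n. change (norm (Rabs (u n))) with (Rabs (Rabs (u n))).
    rewrite Rabs_Rabsolu. apply H.
  - apply (ex_series_ext (fun k => scal M (y ^ k))). reflexivity.
    apply (@ex_series_scal_l R_AbsRing R_NormedModule). apply ex_series_geom. rewrite Rabs_right; lra.
Qed.

Lemma pow_le1 y k : 0 <= y <= 1 -> y ^ S k <= y ^ k.
Proof. intros Hy. simpl. rewrite <- (Rmult_1_l (y^k)) at 2.
  apply Rmult_le_compat_r. apply pow_le; lra. lra. Qed.

Lemma G_ex y M e : 0 <= y < 1 -> (forall k, (1 <= k)%nat -> Rabs (e k) <= M) ->
  ex_series (Gs y e).
Proof.
  intros Hy H. apply (ex_bnd y M); auto. intros k. unfold Gs.
  rewrite Rabs_mult, <- RPow_abs, (Rabs_right y) by lra.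
  assert (HM : Rabs (e (S k)) <= M) by (apply H; lia).
  apply Rle_trans with (M * y ^ S k).
  apply Rmult_le_compat_r. apply pow_le; lra. auto.
  apply Rmult_le_compat_l. pose proof (Rabs_pos (e (S k))); lra.
  apply pow_le1; lra.
Qed.

Lemma G_bound y M e : 0 <= y < 1 -> (forall k, (1 <= k)%nat -> Rabs (e k) <= M) ->
  Rabs (G y e) <= M / (1 - y).
Proof.
  intros Hy H.
  assert (HM : 0 <= M) by (pose proof (H 1%nat (le_n 1)); pose proof (Rabs_pos (e 1%nat)); lra).
  assert (Hb : forall k, Rabs (Gs y e k) <= M * y ^ k).
  { intros k. unfold Gs.
    rewrite Rabs_mult, <- RPow_abs, (Rabs_right y) by lra.
    assert (Rabs (e (S k)) <= M) by (apply H; lia).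
    apply Rle_trans with (M * y ^ S k).
    apply Rmult_le_compat_r. apply pow_le; lra. auto.
    apply Rmult_le_compat_l. lra. apply pow_le1; lra. }
  assert (Hg : is_series (fun k => M * y ^ k) (M * / (1 - y))).
  { apply (is_series_ext (fun k => scal M (y ^ k))). reflexivity.
    apply (@is_series_scal_l R_AbsRing R_NormedModule M). apply is_series_geom. rewrite Rabs_right; lra. }
  assert (Hex : ex_series (fun n => Rabs (Gs y e n))).
  { apply (ex_bnd y M). auto. intros k. rewrite Rabs_Rabsolu. auto. }
  unfold G. eapply Rle_trans; [apply (Series_Rabs _ Hex)|].
  apply Rle_trans with (Series (fun k => M * y ^ k)).
  apply Series_le. intros n. split. apply Rabs_pos. auto.
  eexists; eauto.
  rewrite (is_series_unique _ _ Hg). right. reflexivity.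
Qed.

Lemma G_step y b e M : 0 <= y < 1 -> y ^ 5 = b * (1 - y) ->
  (forall k, (1 <= k)%nat -> Rabs (e k) <= M) ->
  G y e = e 1%nat * y + e 2%nat * y ^ 2 + e 3%nat * y ^ 3 + e 4%nat * y ^ 4
          + b * e 5%nat - b * G y (fun k => e (k + 4)%nat - e (k + 5)%nat).
Proof.
  intros Hy H5 H.
  assert (HM : 0 <= M) by (pose proof (H 1%nat (le_n 1)); pose proof (Rabs_pos (e 1%nat)); lra).
  unfold G. rewrite (Series_incr_n (Gs y e) 4) by (try lia; apply (G_ex y M); auto).
  simpl pred. cbn [sum_f_R0]. unfold Gs at 1 2 3 4.
  assert (E1 : Series (fun k => Gs y e (4 + k)%nat)
     = b * (Series (fun k => e (k + 5)%nat * y ^ k) - Series (fun k => e (k+5)%nat * y ^ S k))).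
  { rewrite <- Series_minus. rewrite <- Series_scal_l. apply Series_ext. intros k.
    unfold Gs. replace (S (4 + k)) with (k + 5)%nat by lia.
    rewrite pow_add, H5. simpl. ring.
    all: apply (ex_bnd y M); auto; intros k; rewrite Rabs_mult, <- RPow_abs, (Rabs_right y) by lra.
    all: assert (Rabs (e (k+5)%nat) <= M) by (apply H; lia).
    apply Rmult_le_compat_r. apply pow_le; lra. auto.
    apply Rle_trans with (M * y ^ S k).
    apply Rmult_le_compat_r. apply pow_le; lra. auto.
    apply Rmult_le_compat_l. lra. apply pow_le1; lra. }
  rewrite E1.
  rewrite Series_incr_1.
  2:{ apply (ex_bnd y M); auto; intros k; rewrite Rabs_mult, <- RPow_abs, (Rabs_right y) by lra.
      assert (Rabs (e (k+5)%nat) <= M) by (apply H; lia).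
      apply Rmult_le_compat_r. apply pow_le; lra. auto. }
  assert (E2 : Series (fun k => e (S k + 5)%nat * y ^ S k) - Series (fun k => e (k + 5)%nat * y ^ S k)
    = - Series (Gs y (fun k => e (k + 4)%nat - e (k + 5)%nat))).
  { rewrite <- Series_minus. rewrite <- Series_opp. apply Series_ext. intros k.
    unfold Gs. replace (S k + 4)%nat with (k + 5)%nat by lia. ring.
    all: apply (ex_bnd y M); auto; intros k; rewrite Rabs_mult, <- RPow_abs, (Rabs_right y) by lra.
    all: assert (Rabs (e (S k+5)%nat) <= M) by (apply H; lia).
    all: assert (Rabs (e (k+5)%nat) <= M) by (apply H; lia).
    all: apply Rle_trans with (M * y ^ S k);
      [apply Rmult_le_compat_r; [apply pow_le; lra | auto]
      | apply Rmult_le_compat_l; [lra | apply pow_le1; lra]]. }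
  simpl pow at 5. rewrite Nat.add_0_l.
  replace (e 5%nat * 1 + Series (fun k : nat => e (S k + 5)%nat * y ^ S k) -
     Series (fun k : nat => e (k + 5)%nat * y ^ S k)) with
    (e 5%nat + (Series (fun k : nat => e (S k + 5)%nat * y ^ S k) -
     Series (fun k : nat => e (k + 5)%nat * y ^ S k))) by ring.
  rewrite E2. simpl. ring.
Qed.


Definition E (p k : nat) : R := dd p (k + 4 * p).

Lemma E_S p k : E (S p) k = E p (k + 4) - E p (k + 5).
Proof. unfold E. cbn [dd]. f_equal; f_equal; lia. Qed.

Lemma E_bound p k : (1 <= k)%nat -> Rabs (E p k) <= 1/5.
Proof. intros Hk. unfold E. destruct (dd_bounds p (k + 4 * p)) as [H1 H2]. lia.
  rewrite Rabs_right; lra. Qed.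

Definition Aterm y b p := b * E p 5 + y * E p 1 + y^2 * E p 2 + y^3 * E p 3 + y^4 * E p 4.

Lemma Aterm_eq y b p : 0 <= y < 1 -> y ^ 5 = b * (1 - y) ->
  Aterm y b p = G y (E p) + b * G y (E (S p)).
Proof.
  intros Hy H5. rewrite (G_step y b (E p) (1/5)); auto.
  2:{ intros; apply E_bound; auto. }
  replace (G y (fun k => E p (k + 4) - E p (k + 5))) with (G y (E (S p))).
  unfold Aterm. ring.
  unfold G, Gs. apply Series_ext. intros k. rewrite E_S. reflexivity.
Qed.

Lemma tele_sum y b M : 0 <= y < 1 -> y ^ 5 = b * (1 - y) ->
  sum_n (fun p => - ((-b) ^ p) * Aterm y b p) M
  = - G y (E 0) + (-b) ^ (S M) * G y (E (S M)).
Proof.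
  intros Hy H5. rewrite sum_n_Reals. induction M as [|M IH].
  - simpl. rewrite Aterm_eq by auto. ring.
  - rewrite tech5, IH, Aterm_eq by auto. simpl. ring.
Qed.

Lemma tele_series y b : 0 <= y < 1 -> 0 <= b < 1 -> y ^ 5 = b * (1 - y) ->
  is_series (fun p => - ((-b) ^ p) * Aterm y b p) (- G y (E 0)).
Proof.
  intros Hy Hb H5.
  set (B := 1/5 / (1 - y)).
  assert (HB : forall n, Rabs (G y (E n)) <= B).
  { intros n. apply G_bound; auto. intros; apply E_bound; auto. }
  assert (Hl : is_lim_seq (sum_n (fun p => - ((-b) ^ p) * Aterm y b p)) (- G y (E 0))).
  { apply (is_lim_seq_ext (fun M => - G y (E 0) + (-b) ^ (S M) * G y (E (S M)))).
    intros M. rewrite tele_sum; auto.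
    replace (Finite (- G y (E 0))) with (Rbar_plus (- G y (E 0)) 0) by (simpl; f_equal; ring).
    apply is_lim_seq_plus'. apply is_lim_seq_const.
    apply (is_lim_seq_le_le (fun M => - (b ^ S M * B)) _ (fun M => b ^ S M * B)).
    - intros M. assert (Hp : Rabs ((-b) ^ S M * G y (E (S M))) <= b ^ S M * B).
      { rewrite Rabs_mult, <- RPow_abs, Rabs_Ropp, (Rabs_right b) by lra.
        apply Rmult_le_compat_l. apply pow_le; lra. auto. }
      apply Rabs_le_between in Hp. lra.
    - replace (Finite 0) with (Rbar_opp (Finite (0 * B))) by (simpl; f_equal; ring).
      apply -> is_lim_seq_opp. apply is_lim_seq_mult'; [|apply is_lim_seq_const].
      apply -> is_lim_seq_incr_1. apply is_lim_seq_geom. rewrite Rabs_right; lra.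
    - replace (Finite 0) with (Finite (0 * B)) by (f_equal; ring).
      apply is_lim_seq_mult'; [|apply is_lim_seq_const].
      apply -> is_lim_seq_incr_1. apply is_lim_seq_geom. rewrite Rabs_right; lra. }
  exact Hl.
Qed.


Lemma pow_le_one r n : 0 <= r <= 1 -> r ^ n <= 1.
Proof. intros Hr. induction n as [|n IH]. simpl; lra.
  eapply Rle_trans. apply pow_le1; auto. auto. Qed.

Lemma rad t : Rabs t < 1 -> Rbar_lt (Rabs t) (CV_radius c).
Proof.
  intros Ht. destruct (CV_radius_bounded c) as [Hub _].
  set (r := (Rabs t + 1) / 2).
  assert (Hr : 0 <= r < 1) by (unfold r; pose proof (Rabs_pos t); lra).
  apply Rbar_lt_le_trans with (Finite r).
  simpl. unfold r. lra.
  apply Hub. exists (1/5). intros n. rewrite Rabs_mult, <- RPow_abs, (Rabs_right r) by lra.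
  destruct (c_bounds n). rewrite (Rabs_right (c n)) by lra.
  apply Rle_trans with (1/5 * 1). apply Rmult_le_compat; try lra. apply pow_le; lra.
  apply pow_le_one. lra. lra.
Qed.

Lemma ODE t : Rabs t < 1 ->
  (1 - t) * PSeries (PS_derive c) t = (1 - PSeries c t) / 5.
Proof.
  intros Ht.
  assert (Hd : ex_series (fun n => PS_derive c n * t ^ n)).
  { apply ex_pseries_R. apply ex_pseries_derive. apply rad; auto. }
  assert (Hc : ex_series (fun n => c n * t ^ n)).
  { apply ex_pseries_R. apply CV_radius_inside. apply rad; auto. }
  assert (Hc1 : ex_series (fun n => c (S n) * t ^ (S n))).
  { apply (ex_series_incr_1 (fun n => c n * t ^ n)). auto. }
  assert (HP : PSeries c t = Series (fun n => c (S n) * t ^ (S n))).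
  { unfold PSeries. rewrite Series_incr_1 by auto. simpl c at 1. ring. }
  assert (HD : PSeries (PS_derive c) t =
     1/5 + (t * PSeries (PS_derive c) t - /5 * Series (fun n => c (S n) * t ^ (S n)))).
  { unfold PSeries at 1. rewrite Series_incr_1 by auto.
    replace (PS_derive c 0 * t ^ 0) with (1/5) by (unfold PS_derive; simpl; field).
    f_equal. unfold PSeries. rewrite <- Series_scal_l, <- Series_scal_l.
    rewrite <- Series_minus.
    2:{ apply (ex_series_ext (fun n => scal t (PS_derive c n * t ^ n))). reflexivity.
        apply (@ex_series_scal_l R_AbsRing R_NormedModule). auto. }
    2:{ apply (ex_series_ext (fun n => scal (/5) (c (S n) * t ^ S n))). reflexivity.
        apply (@ex_series_scal_l R_AbsRing R_NormedModule). auto. }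
    apply Series_ext. intros n. unfold PS_derive.
    rewrite (c_S (S n)) by lia.
    assert (HI : INR (S (S n)) <> 0) by (apply not_0_INR; lia).
    rewrite (S_INR (S n)) in *. simpl pow.
    field. auto. }
  rewrite HP. set (D := PSeries (PS_derive c) t) in *. replace ((1 - t) * D) with (D - t * D) by ring. lra.
Qed.

Lemma binom_series y : 0 <= y < 1 -> 1 - PSeries c y = exp (ln (1 - y) / 5).
Proof.
  intros Hy.
  set (h := fun t => (1 - PSeries c t) * exp (- ln (1 - t) / 5)).
  assert (Hder : forall t, Rabs t < 1 -> is_derive h t 0).
  { intros t Ht.
    assert (Ht1 : t < 1) by (apply Rabs_lt_between in Ht; lra).
    pose proof (is_derive_PSeries c t (rad t Ht)) as H1.
    assert (H2 : is_derive (fun t => exp (- ln (1 - t) / 5)) t (exp (- ln (1-t)/5) * (/(1-t)/5))).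
    { auto_derive. lra. replace (1 + - t) with (1 - t) by ring. unfold Rdiv. field. lra. }
    pose proof (is_derive_mult _ _ t _ _ (is_derive_minus _ _ t _ _ (is_derive_const 1 t) H1) H2
                 (fun n m => Rmult_comm n m)) as Hd.
    match type of Hd with is_derive _ _ ?v => replace 0 with v end.
    exact Hd.
    pose proof (ODE t Ht) as Ho.
    change (plus (mult (minus zero (PSeries (PS_derive c) t)) (exp (- ln (1 - t) / 5)))
      (mult (minus 1 (PSeries c t)) (exp (- ln (1 - t) / 5) * (/ (1 - t) / 5))) = 0).
    unfold plus, mult, minus, zero, opp; simpl. unfold plus; simpl.
    replace (1 + - PSeries c t) with (5 * ((1 - t) * PSeries (PS_derive c) t)) by lra.
    field. lra. }
  destruct (MVT_gen h 0 y (fun _ => 0)) as [z [Hz Heq]].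
  - intros t Ht. apply Hder. rewrite Rmin_left, Rmax_right in Ht by lra.
    apply Rabs_def1; lra.
  - intros t Ht. rewrite Rmin_left, Rmax_right in Ht by lra.
    apply continuity_pt_filterlim. apply (@ex_derive_continuous R_AbsRing R_NormedModule).
    exists 0. apply Hder. apply Rabs_def1; lra.
  - assert (Hh0 : h 0 = 1).
    { unfold h. rewrite PSeries_0. simpl c. replace (1 - 0) with 1 by ring.
      rewrite ln_1. replace (- 0 / 5) with 0 by field. rewrite exp_0. ring. }
    assert (Hhy : h y = 1) by lra.
    unfold h in Hhy.
    replace (- ln (1 - y) / 5) with (- (ln (1 - y) / 5)) in Hhy by field.
    rewrite exp_Ropp in Hhy.
    pose proof (exp_pos (ln (1 - y) / 5)).
    apply Rmult_eq_reg_r with (/ exp (ln (1 - y) / 5)). rewrite Hhy. field. lra.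
    apply Rinv_neq_0_compat. lra.
Qed.


Lemma Kterm_eq a j p : a <> 0 -> (1 <= j)%nat ->
  Kterm a j p = - ((- / a ^ 4) ^ p) * E p j.
Proof.
  intros Ha Hj. unfold Kterm, E. rewrite sum_n_Reals.
  rewrite (sum_eq _ (fun n => (-1) ^ n * Binomial.C p n * c (j + 4 * p + n)%nat)).
  2:{ intros i Hi. unfold binom. do 2 f_equal. lia. }
  rewrite binsum. rewrite pow_mult.
  replace (- / a ^ 4) with ((-1) * / a ^ 4) by ring.
  rewrite Rpow_mult_distr, pow_inv.
  replace ((-1) ^ S p) with (-1 * (-1) ^ p) by reflexivity.
  assert ((a ^ 4) ^ p <> 0) by (apply pow_nonzero, pow_nonzero; auto).
  field. auto.
Qed.

Lemma K0term_eq a p : a <> 0 ->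
  K0term a p = - ((- / a ^ 4) ^ p) * (/ a ^ 4 * E p 5).
Proof.
  intros Ha. unfold K0term, E. rewrite sum_n_Reals.
  rewrite (sum_eq _ (fun n => (-1) ^ n * Binomial.C p n * c (5 + 4 * p + n)%nat)).
  2:{ intros i Hi. unfold binom. do 2 f_equal. lia. }
  rewrite binsum. rewrite pow_mult.
  replace (- / a ^ 4) with ((-1) * / a ^ 4) by ring.
  rewrite Rpow_mult_distr, pow_inv.
  replace ((a ^ 4) ^ S p) with (a ^ 4 * (a ^ 4) ^ p) by reflexivity.
  replace ((-1) ^ S p) with (-1 * (-1) ^ p) by reflexivity.
  assert (a ^ 4 <> 0) by (apply pow_nonzero; auto).
  assert ((a ^ 4) ^ p <> 0) by (apply pow_nonzero; auto).
  field. auto.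
Qed.

Theorem mainTheorem2 (a x : R) (ha : 1 < Rabs a) (hx : x ^ 5 + x = a) :
  ex_series (K0term a) /\ ex_series (Kterm a 1) /\ ex_series (Kterm a 2) /\
  ex_series (Kterm a 3) /\ ex_series (Kterm a 4) /\
  (let y := x / a in
   K4 a * y ^ 4 + K3 a * y ^ 3 + K2 a * y ^ 2 + K1 a * y + K0 a = 0).
Proof.
  assert (Ha : a <> 0) by (intro H; rewrite H, Rabs_R0 in ha; lra).
  assert (Habs4 : Rabs a ^ 4 = a ^ 4).
  { rewrite RPow_abs. apply Rabs_right. replace (a ^ 4) with ((a ^ 2) ^ 2) by ring.
    apply Rle_ge, pow2_ge_0. }
  assert (Ha4 : 1 < a ^ 4) by (rewrite <- Habs4; apply Rlt_pow_R1; auto; lia).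
  set (b := / a ^ 4).
  assert (Hb : 0 <= b < 1).
  { unfold b. split. left. apply Rinv_0_lt_compat. lra.
    rewrite <- Rinv_1. apply Rinv_lt_contravar; lra. }
  assert (HK : forall j, (1 <= j)%nat -> ex_series (Kterm a j)).
  { intros j Hj. apply (ex_bnd b (1/5)). lra. intros p.
    rewrite Kterm_eq by auto. fold b.
    rewrite Rabs_mult, Rabs_Ropp, <- RPow_abs, Rabs_Ropp, (Rabs_right b) by lra.
    rewrite Rmult_comm. apply Rmult_le_compat_r. apply pow_le; lra.
    apply E_bound. auto. }
  assert (HK0 : ex_series (K0term a)).
  { apply (ex_bnd b (1/5)). lra. intros p.
    rewrite K0term_eq by auto. fold b.
    rewrite Rabs_mult, Rabs_Ropp, <- RPow_abs, Rabs_Ropp, (Rabs_right b) by lra.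
    rewrite Rabs_mult, (Rabs_right b) by lra.
    pose proof (E_bound p 5 ltac:(lia)). pose proof (Rabs_pos (E p 5)).
    assert (b * Rabs (E p 5) <= 1/5).
    { apply Rle_trans with (1 * (1/5)). apply Rmult_le_compat; lra. lra. }
    rewrite Rmult_comm. apply Rmult_le_compat_r. apply pow_le; lra. auto. }
  split; [auto|]. split; [apply HK; lia|]. split; [apply HK; lia|].
  split; [apply HK; lia|]. split; [apply HK; lia|].
  intros y.
  assert (Hy5 : y ^ 5 * a ^ 4 + y = 1).
  { unfold y. replace ((x/a)^5 * a^4 + x/a) with ((x^5 + x)/a) by (field; auto).
    rewrite hx. field. auto. }
  assert (Hy : 0 < y < 1).
  { assert (Hp : 0 < a ^ 4) by lra.
    destruct (Rle_lt_dec y 0) as [Hle|Hlt].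
    - exfalso. assert (y ^ 5 <= 0).
      { replace (y ^ 5) with (- ((- y) ^ 5)) by ring. assert (0 <= (-y)^5) by (apply pow_le; lra). lra. }
      assert (y ^ 5 * a ^ 4 <= 0).
      { apply Rmult_le_0_r; lra. }
      lra.
    - split; auto. assert (0 < y ^ 5 * a ^ 4) by (apply Rmult_lt_0_compat; [apply pow_lt|]; lra).
      lra. }
  assert (H5 : y ^ 5 = b * (1 - y)).
  { unfold b. apply Rmult_eq_reg_r with (a ^ 4). rewrite <- Hy5. field. auto.
    apply pow_nonzero; auto. }
  assert (Hyy : 0 <= y < 1) by lra.
  set (S0 := Series (K0term a)). set (S1 := Series (Kterm a 1)).
  set (S2 := Series (Kterm a 2)). set (S3 := Series (Kterm a 3)). set (S4 := Series (Kterm a 4)).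
  assert (HT : is_series (fun p => - ((-b) ^ p) * Aterm y b p) (S0 + y * S1 + y^2 * S2 + y^3 * S3 + y^4 * S4)).
  { pose proof (Series_correct _ HK0) as I0.
    pose proof (@is_series_scal_l R_AbsRing R_NormedModule y _ _ (Series_correct _ (HK 1%nat ltac:(lia)))) as I1.
    pose proof (@is_series_scal_l R_AbsRing R_NormedModule (y^2) _ _ (Series_correct _ (HK 2%nat ltac:(lia)))) as I2.
    pose proof (@is_series_scal_l R_AbsRing R_NormedModule (y^3) _ _ (Series_correct _ (HK 3%nat ltac:(lia)))) as I3.
    pose proof (@is_series_scal_l R_AbsRing R_NormedModule (y^4) _ _ (Series_correct _ (HK 4%nat ltac:(lia)))) as I4.
    pose proof (@is_series_plus R_AbsRing R_NormedModule _ _ _ _ I0 I1) as J1.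
    pose proof (@is_series_plus R_AbsRing R_NormedModule _ _ _ _ J1 I2) as J2.
    pose proof (@is_series_plus R_AbsRing R_NormedModule _ _ _ _ J2 I3) as J3.
    pose proof (@is_series_plus R_AbsRing R_NormedModule _ _ _ _ J3 I4) as J4.
    match type of J4 with is_series _ ?l => replace (S0 + y * S1 + y^2 * S2 + y^3 * S3 + y^4 * S4) with l end.
    2:{ unfold plus, scal; simpl. unfold plus, mult; simpl. reflexivity. }
    eapply is_series_ext; [|exact J4]. intros n.
    unfold plus, scal; simpl. unfold plus, mult; simpl.
    rewrite K0term_eq, !Kterm_eq by (auto; lia). fold b. unfold Aterm. ring. }
  pose proof (tele_series y b Hyy Hb H5) as HT2.
  assert (Heq : S0 + y * S1 + y^2 * S2 + y^3 * S3 + y^4 * S4 = - G y (E 0)).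
  { rewrite <- (is_series_unique _ _ HT). apply is_series_unique. auto. }
  assert (HG : G y (E 0) = 1 - exp (ln (1 - y) / 5)).
  { pose proof (binom_series y Hyy) as HB. rewrite <- HB.
    enough (PSeries c y = G y (E 0)) by lra.
    assert (Hc : ex_series (fun n => c n * y ^ n)).
    { apply ex_pseries_R. apply CV_radius_inside. apply rad. rewrite Rabs_right; lra. }
    unfold PSeries. rewrite Series_incr_1 by auto. simpl c at 1.
    unfold G, Gs, E. rewrite Rmult_0_l, Rplus_0_l. apply Series_ext. intros k.
    rewrite Nat.mul_0_r, Nat.add_0_r. reflexivity. }
  assert (HR : Rpower (Rabs a) (4/5) * y = exp (ln (1 - y) / 5)).
  { assert (Hay : 1 - y = y ^ 5 * Rabs a ^ 4) by (rewrite Habs4; lra).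
    assert (Hapos : 0 < Rabs a) by lra.
    rewrite Hay, ln_mult, !ln_pow by (try apply pow_lt; lra).
    unfold Rpower. replace ((INR 5 * ln y + INR 4 * ln (Rabs a)) / 5)
      with (ln y + 4 / 5 * ln (Rabs a)) by (simpl; field).
    rewrite exp_plus, exp_ln by lra. ring. }
  unfold K0, K1, K2, K3, K4. fold S0 S1 S2 S3 S4.
  replace (S4 * y ^ 4 + S3 * y ^ 3 + S2 * y ^ 2 + (- Rpower (Rabs a) (4 / 5) + S1) * y + (1 + S0))
    with ((S0 + y * S1 + y^2 * S2 + y^3 * S3 + y^4 * S4) - Rpower (Rabs a) (4 / 5) * y + 1) by ring.
  rewrite Heq, HG, HR. ring.
Qed.
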